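(* Let $0<b<1$. For every instance, the naive future-biased agent with bias $b$ incurs cost $C_f(s)\le \frac{1}{b}C_o(s)$; that is, its cost ratio is at most $1/b$.
   Context: An instance is a finite directed acyclic graph $G=(V,E)$ with nonnegative edge costs $c(u,v)$, start node $s$ and target node $t$, where $t$ is the unique node with no outgoing edges; $C_o(u)$ is the minimum cost of a $u$–$t$ path. The naive agent with bias $b$ (called future-biased when $b<1$): $C_f(t)=0$, and for $u\ne t$, $S_f(u)\in\arg\min_{v:(u,v)\in E}(b\,c(u,v)+C_o(v))$, $C_f(u)=c(u,S_f(u))+C_f(S_f(u))$; $C_f(s)$ is the cost it incurs traveling from $s$ to $t$, and its cost ratio is $C_f(s)/C_o(s)$. *)

(* Defs.v *)
From mathcomp Require Import all_boot all_order all_algebra.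
Set Implicit Arguments. Unset Strict Implicit. Unset Printing Implicit Defensive.
Import Order.TTheory GRing.Theory Num.Theory.
Local Open Scope ring_scope.

(* A graph on a finite vertex type V is given by an edge relation E : rel V.
   A walk from x is a sequence p with [path E x p]; it ends at [last x p]. *)

Definition acyclic (V : finType) (E : rel V) : Prop :=
  forall (x : V) (p : seq V), p != [::] -> path E x p -> last x p != x.

Definition unique_sink (V : finType) (E : rel V) (t : V) : Prop :=
  (forall v, ~~ E t v) /\ (forall u, u != t -> exists v, E u v).

Fixpoint pcost (R : numDomainType) (V : Type) (c : V -> V -> R) (x : V)
    (p : seq V) : R :=
  match p with
  | [::] => 0
  | y :: p' => c x y + pcost c y p'
  end.

Definition is_opt_cost (R : realFieldType) (V : finType) (E : rel V)
    (c : V -> V -> R) (t : V) (Co : V -> R) : Prop :=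
  forall u : V,
    (exists p, [/\ path E u p, last u p = t & pcost c u p = Co u]) /\
    (forall p, path E u p -> last u p = t -> Co u <= pcost c u p).

Definition is_naive_choice (R : realFieldType) (V : finType) (E : rel V)
    (c : V -> V -> R) (t : V) (b : R) (Co : V -> R) (Sf : V -> V) : Prop :=
  forall u : V, u != t ->
    E u (Sf u) /\
    (forall v, E u v -> b * c u (Sf u) + Co (Sf u) <= b * c u v + Co v).

Definition is_agent_cost (R : realFieldType) (V : finType)
    (c : V -> V -> R) (t : V) (Sf : V -> V) (Cf : V -> R) : Prop :=
  Cf t = 0 /\ (forall u : V, u != t -> Cf u = c u (Sf u) + Cf (Sf u)).

(* Main.v *)
Require Import Defs.
From mathcomp Require Import all_boot all_order all_algebra.
From mathcomp Require Import zify.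
Import Order.TTheory GRing.Theory Num.Theory.
Local Open Scope ring_scope.

Lemma traj_path (V : finType) (E : rel V) (t : V) (Sf : V -> V) :
  (forall u, u != t -> E u (Sf u)) ->
  forall m x, (forall k, (k < m)%N -> iter k Sf x != t) ->
  path E x (traject Sf (Sf x) m).
Proof.
move=> HE; elim=> [|m IH] x Hk //=.
rewrite HE ?(Hk 0%N) //=.
apply: IH => k Hkm; rewrite -iterSr; exact: Hk.
Qed.

Lemma reach_t (V : finType) (E : rel V) (t : V) (Sf : V -> V) (s : V) :
  acyclic E ->
  (forall u, u != t -> E u (Sf u)) ->
  exists n, iter n Sf s = t.
Proof.
move=> Hac HE.
case: (boolP [exists k : 'I_(#|V|.+1), iter k Sf s == t]).
  by case/existsP=> k /eqP Hk; exists k.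
rewrite negb_exists => /forallP Hno.
have Hn : forall k, (k <= #|V|)%N -> iter k Sf s != t.
  by move=> k Hk; have := Hno (Ordinal (n:=#|V|.+1) (m:=k) Hk).
pose f := fun k : 'I_(#|V|.+1) => iter k Sf s.
have : ~~ injectiveb f.
  apply/negP => /injectiveP Hi; have := @leq_card _ _ f Hi.
  by rewrite card_ord ltnn.
case/injectivePn => i [j Hij Hf].
wlog Hlt : i j Hij Hf / (i < j)%N.
  move=> W; case: (ltngtP i j) => H.
  - exact: (W i j).
  - apply: (W j i) => //; by rewrite eq_sym.
  - by move: Hij; rewrite -(inj_eq val_inj) /= H eqxx.
have Hp := @traj_path V E t Sf HE (j - i) (iter i Sf s).
have Hpath : path E (iter i Sf s) (traject Sf (Sf (iter i Sf s)) (j - i)).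
  apply: Hp => k Hk; rewrite -iterD; apply: Hn.
  have := ltn_ord j; lia.
have := Hac _ _ _ Hpath.
rewrite last_traject -iterD subnK ?(ltnW Hlt) //.
rewrite /f in Hf; rewrite -Hf eqxx.
move=> H; exfalso; suff Hne : traject Sf (Sf (iter i Sf s)) (j - i) != [::] by have := H Hne.
rewrite -size_eq0 size_traject; lia.
Qed.

Lemma pcost_ge0 (R : realFieldType) (V : finType) (E : rel V) (c : V -> V -> R) :
  (forall u v, E u v -> 0 <= c u v) ->
  forall p x, path E x p -> 0 <= pcost c x p.
Proof.
move=> Hc; elim=> [|y p IH] x //= /andP[Exy Hp].
by rewrite addr_ge0 ?Hc ?IH.
Qed.

Theorem claim7 (R : realFieldType) (V : finType) (E : rel V)
    (c : V -> V -> R) (s t : V) (b : R)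
    (Co : V -> R) (Sf : V -> V) (Cf : V -> R) :
  0 < b -> b < 1 ->
  acyclic E ->
  unique_sink E t ->
  (forall u v, E u v -> 0 <= c u v) ->
  is_opt_cost E c t Co ->
  is_naive_choice E c t b Co Sf ->
  is_agent_cost c t Sf Cf ->
  Cf s <= Co s / b.
Proof.
move=> b0 b1 Hac [Ht _] Hc Hopt Hch [Cft CfS].
have HE : forall u, u != t -> E u (Sf u) by move=> u /Hch [].
have Cot : Co t = 0.
  have [[p [Hp Hl Hcost]] Hle] := Hopt t.
  case: p Hp Hl Hcost => [|y p] /=; first by move=> _ _ <-.
  by rewrite (negbTE (Ht y)).
have key : forall u, u != t -> b * c u (Sf u) + Co (Sf u) <= Co u.
  move=> u ut; have [[p [Hp Hl Hcost]] _] := Hopt u.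
  case: p Hp Hl Hcost => [|w p] /=; first by move=> _ Hl; rewrite Hl eqxx in ut.
  move=> /andP[Euw Hp] Hl Hcost.
  apply: le_trans (proj2 (Hch u ut) w Euw) _.
  rewrite -Hcost; apply: lerD.
    rewrite -[X in _ <= X]mul1r; apply: ler_wpM2r; [exact: Hc | exact: ltW].
  by apply: (proj2 (Hopt w)).
have main : forall n u, iter n Sf u = t -> b * Cf u <= Co u.
  elim=> [|n IH] u.
    by move=> /= ->; rewrite Cft Cot mulr0.
  rewrite iterSr => Hn.
  case: (eqVneq u t) => [->|ut]; first by rewrite Cft Cot mulr0.
  rewrite CfS // mulrDr; apply: le_trans (key u ut).
  by rewrite lerD2l; apply: IH.
have [n Hn] := @reach_t V E t Sf s Hac HE.
rewrite ler_pdivlMr // mulrC; exact: main Hn.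
Qed.
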